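(* Let $n\ge1$, let $z_1,\dots,z_n\in\mathbb{C}$ be pairwise distinct, let $k_1,\dots,k_n\ge 0$ be integers, let $\beta_1,\dots,\beta_n\in\mathbb{C}\setminus\{0\}$ and $\alpha_i^{(j)}\in\mathbb{C}\setminus\{0\}$ ($j=1,\dots,n$, $i=1,\dots,k_j$), and set $m=\sum_{j=1}^n(k_j+1)$. Let $Z=J_{1,k_1}\oplus\cdots\oplus J_{n,k_n}\in\mathbb{C}^{m\times m}$, where $J_{j,k_j}\in\mathbb{C}^{(k_j+1)\times(k_j+1)}$ is upper bidiagonal with diagonal entries $z_j$ and superdiagonal entries, from top to bottom, $\alpha_{k_j}^{(j)},\dots,\alpha_1^{(j)}$, and let $w=\begin{bmatrix}\beta_1 e_{k_1+1}^\top&\cdots&\beta_n e_{k_n+1}^\top\end{bmatrix}^\top$ with $e_{k_j+1}=(0,\dots,0,1)^\top\in\mathbb{R}^{k_j+1}$. Define on polynomials the inner product $$\langle p,q\rangle_S=\sum_{j=1}^n|\beta_j|^2\sum_{r=0}^{k_j}\left|\frac{\prod_{i=1}^r\alpha_i^{(j)}}{r!}\right|^2\overline{q^{(r)}(z_j)}\,p^{(r)}(z_j).$$ Let $k<m$ and let $Q_k=[q_1,\dots,q_k]\in\mathbb{C}^{m\times k}$ be a nested orthonormal basis for $\mathcal{K}_k(Z,w)$, with Hessenberg matrix $H_k\in\mathbb{C}^{k\times k}$, scalar $h_{k+1,k}>0$ and vector $q_{k+1}\in\mathbb{C}^m$ with $q_{k+1}^HQ_k=0$ such that $$ZQ_k=Q_kH_k+h_{k+1,k}\,q_{k+1}e_k^\top.$$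 Then the polynomials $p_0,\dots,p_k$ defined by $p_{\ell}(Z)w=q_{\ell+1}$, $p_\ell\in\mathcal{P}_\ell$, form a sequence of Sobolev orthonormal polynomials for $\langle\cdot,\cdot\rangle_S$, and they satisfy the recurrence relation $$z\begin{bmatrix}p_0(z)&\cdots&p_{k-1}(z)\end{bmatrix}=\begin{bmatrix}p_0(z)&\cdots&p_{k-1}(z)\end{bmatrix}H_k+h_{k+1,k}\,p_k(z)\,e_k^\top.$$ Conversely, if $p_0,\dots,p_k$ is a sequence of Sobolev orthonormal polynomials for $\langle\cdot,\cdot\rangle_S$ satisfying this recurrence with a Hessenberg matrix $H_k$ and $h_{k+1,k}>0$, then $q_{\ell+1}:=p_\ell(Z)w$ ($\ell=0,\dots,k$) give a nested orthonormal basis $Q_k=[q_1,\dots,q_k]$ of $\mathcal{K}_k(Z,w)$ with $ZQ_k=Q_kH_k+h_{k+1,k}q_{k+1}e_k^\top$.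
   Context: $\mathcal{P}_\ell$ is the space of complex polynomials of degree at most $\ell$ ($\mathcal{P}_{-1}=\{0\}$). $\mathcal{K}_k(A,v)=\mathrm{span}\{v,Av,\dots,A^{k-1}v\}$. A matrix $Q_k=[q_1,\dots,q_k]$ is a nested orthonormal basis for $\mathcal{K}_k(A,v)$ if $Q_k^HQ_k=I$ and $\mathrm{span}\{q_1,\dots,q_i\}=\mathcal{K}_i(A,v)$ for $i=1,\dots,k$. A Hessenberg matrix $H$ has $h_{i,j}=0$ whenever $i-1>j$. A sequence $\{p_\ell\}$ is a sequence of Sobolev orthonormal polynomials for $\langle\cdot,\cdot\rangle_S$ if $p_\ell\in\mathcal{P}_\ell\setminus\mathcal{P}_{\ell-1}$ and $\langle p_k,p_\ell\rangle_S=\delta_{k\ell}$. $e_k$ is the $k$th standard unit vector of $\mathbb{R}^k$. *)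

(* Defs.v *)
(* Complex numbers: an arbitrary numClosedFieldType C
   (e.g. C = R[i] for real R). *)
From HB Require Import structures.
From mathcomp Require Import all_boot all_order all_algebra.
Set Implicit Arguments. Unset Strict Implicit. Unset Printing Implicit Defensive.
Import Order.TTheory GRing.Theory Num.Theory.
Local Open Scope ring_scope.

Section Defs.
Variable C : numClosedFieldType.

Definition polymx_apply m (p : {poly C}) (A : 'M[C]_m) (v : 'cV[C]_m) : 'cV[C]_m :=
  \sum_(i < size p) p`_i *: iter i (mulmx A) v.

Definition adj m k (A : 'M[C]_(m, k)) : 'M[C]_(k, m) := map_mx (fun x => x^*) A^T.

Definition jordan_block (zj : C) (kj : nat) (alphaj : nat -> C) : 'M[C]_(kj.+1) :=
  \matrix_(a, b) (if a == b then zj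
                  else if (b : nat) == (a : nat).+1 then alphaj (kj - a)%N else 0).

Definition Zmat n (z : 'I_n -> C) (kj : 'I_n -> nat) (alpha : 'I_n -> nat -> C) :
  'M[C]_(\sum_(j < n) (kj j).+1) :=
  mxdiag (fun j : 'I_n => jordan_block (z j) (kj j) (alpha j)).

Definition wvec n (kj : 'I_n -> nat) (beta : 'I_n -> C) :
  'cV[C]_(\sum_(j < n) (kj j).+1) :=
  mxcol (fun j : 'I_n => beta j *: (delta_mx ord_max 0 : 'cV[C]_((kj j).+1))).

Definition sobolev_ip n (z : 'I_n -> C) (kj : 'I_n -> nat) (beta : 'I_n -> C)
  (alpha : 'I_n -> nat -> C) (p q : {poly C}) : C :=
  \sum_(j < n) `|beta j| ^+ 2 *
    \sum_(r < (kj j).+1)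
      `|(\prod_(1 <= i < r.+1) alpha j i) / (r`!)%:R| ^+ 2
        * ((q^`(r)).[z j])^* * (p^`(r)).[z j].

Definition sobolev_onseq (ip : {poly C} -> {poly C} -> C) (p : nat -> {poly C})
  (k : nat) : Prop :=
  (forall l, (l <= k)%N -> size (p l) = l.+1) /\
  (forall a b, (a <= k)%N -> (b <= k)%N -> ip (p a) (p b) = (a == b)%:R).

Definition is_hessenberg k (H : 'M[C]_k) : Prop :=
  forall i j : 'I_k, ((j : nat).+1 < i)%N -> H i j = 0.

Definition ek k : 'rV[C]_k := \row_(j < k) (if (j : nat) == k.-1 then 1 else 0).

(* rows are (A^r v)^T, r < i : spans K_i(A, v) (transposed) *)
Definition krylov_mx m (A : 'M[C]_m) (v : 'cV[C]_m) (i : nat) : 'M[C]_(i, m) :=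
  \matrix_(r < i, c < m) (iter r (mulmx A) v) c 0.

(* rows are q_1^T, ..., q_i^T (remaining rows zero) *)
Definition firstcols m k (Q : 'M[C]_(m, k)) (i : nat) : 'M[C]_(k, m) :=
  \matrix_(r < k, c < m) (if (r < i)%N then Q c r else 0).

Definition nested_onb m k (A : 'M[C]_m) (v : 'cV[C]_m) (Q : 'M[C]_(m, k)) : Prop :=
  adj Q *m Q = 1%:M /\
  forall i, (1 <= i <= k)%N -> (firstcols Q i == krylov_mx A v i)%MS.

(* q_{l+1}: the l-th column of Q for l < k, and q for l = k *)
Definition colq m k (Q : 'M[C]_(m, k)) (q : 'cV[C]_m) (l : nat) : 'cV[C]_m :=
  match @insub nat (fun x => (x < k)%N) 'I_k l with
  | Some j => col j Q
  | None => q
  end.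

Definition prow (p : nat -> {poly C}) k (x : C) : 'rV[C]_k :=
  \row_(j < k) (p j).[x].

Definition recurrence (p : nat -> {poly C}) k (H : 'M[C]_k) (h : C) : Prop :=
  forall x : C, x *: prow p k x = prow p k x *m H + (h * (p k).[x]) *: ek k.

End Defs.
Arguments ek {C} k.

(* Main.v *)
Require Import Defs.
From HB Require Import structures.
From mathcomp Require Import all_boot all_order all_algebra.
From mathcomp Require Import ring lra.
Set Implicit Arguments. Unset Strict Implicit. Unset Printing Implicit Defensive.
Import Order.TTheory GRing.Theory Num.Theory.
Local Open Scope ring_scope.



Section Gen.
Variable C : numClosedFieldType.
Variable m : nat.
Implicit Types (A : 'M[C]_m) (v : 'cV[C]_m) (p : {poly C}).

Lemma PAw A v p N : (size p <= N)%N ->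
  polymx_apply p A v = \sum_(s < N) p`_s *: iter s (mulmx A) v.
Proof.
move=> hN; rewrite /polymx_apply (big_ord_widen N (fun s => p`_s *: iter s (mulmx A) v)) //.
rewrite big_mkcond; apply: eq_bigr => i _; case: ifP => // /negbT; rewrite -leqNgt => H.
by rewrite nth_default // scale0r.
Qed.

Lemma PA0 A v : polymx_apply 0 A v = 0.
Proof. by rewrite (PAw _ _ (N:=0)) ?size_poly0 // big_ord0. Qed.

Lemma PAD A v p q : polymx_apply (p + q) A v = polymx_apply p A v + polymx_apply q A v.
Proof.
set N := maxn (size p) (size q).
rewrite (PAw _ _ (N:=N)) ?(leq_trans (size_polyD _ _)) //.
rewrite (PAw _ _ (p:=p) (N:=N)) ?leq_maxl // (PAw _ _ (p:=q) (N:=N)) ?leq_maxr //.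
by rewrite -big_split; apply: eq_bigr => i _; rewrite coefD scalerDl.
Qed.

Lemma PAZ A v c p : polymx_apply (c *: p) A v = c *: polymx_apply p A v.
Proof.
rewrite (PAw _ _ (N:=size p)) ?size_scale_leq // (PAw _ _ (p:=p) (N:=size p)) //.
by rewrite scaler_sumr; apply: eq_bigr => i _; rewrite coefZ scalerA.
Qed.

Lemma PAC A v c : polymx_apply c%:P A v = c *: v.
Proof.
by rewrite (PAw _ _ (N:=1)) ?size_polyC_leq1 // big_ord1 coefC /=.
Qed.

Lemma PAXM A v p : polymx_apply ('X * p) A v = A *m polymx_apply p A v.
Proof.
rewrite (PAw _ _ (N:=(size p).+1)); last first.
  by apply: (leq_trans (size_polyMleq _ _)); rewrite size_polyX.
rewrite (PAw _ _ (p:=p) (N:=size p)) // big_ord_recl coefXM /= scale0r add0r.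
rewrite mulmx_sumr; apply: eq_bigr => i _; rewrite coefXM /= -scalemxAr.
by rewrite add0n.
Qed.

Lemma PAsum A v I (r : seq I) (P : pred I) (F : I -> {poly C}) :
  polymx_apply (\sum_(i <- r | P i) F i) A v = \sum_(i <- r | P i) polymx_apply (F i) A v.
Proof. by apply: (big_morph _ (PAD A v) (PA0 A v)). Qed.

Lemma PAB A v p q : polymx_apply (p - q) A v = polymx_apply p A v - polymx_apply q A v.
Proof. by rewrite PAD -scaleN1r PAZ scaleN1r. Qed.

Lemma PAXn A v s : polymx_apply 'X^s A v = iter s (mulmx A) v.
Proof.
elim: s => [|s IH]; first by rewrite expr0 -polyC1 PAC scale1r.
by rewrite exprS PAXM IH.
Qed.

Lemma iter_vZ A v c s : iter s (mulmx A) (c *: v) = c *: iter s (mulmx A) v.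
Proof. by elim: s => //= s ->; rewrite scalemxAr. Qed.

Lemma PAvZ A v c p : polymx_apply p A (c *: v) = c *: polymx_apply p A v.
Proof.
rewrite /polymx_apply scaler_sumr; apply: eq_bigr => i _.
by rewrite iter_vZ !scalerA mulrC.
Qed.

Definition rv2f i (D : 'rV[C]_i) (s : nat) : C :=
  match insub s with Some j => D 0 j | None => 0 end.

Lemma rv2fE i (D : 'rV[C]_i) (j : 'I_i) : rv2f D j = D 0 j.
Proof. by rewrite /rv2f valK. Qed.

Lemma krylov_mul A v i (D : 'rV[C]_i) :
  D *m krylov_mx A v i = (polymx_apply (\poly_(s < i) rv2f D s) A v)^T.
Proof.
apply/matrixP => x c; rewrite (PAw _ _ (N:=i)) ?size_poly // !mxE summxE.
apply: eq_bigr => s _; rewrite !mxE coef_poly ltn_ord (ord1 x) rv2fE.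
done.
Qed.

Lemma krylov_sub A v i p : (size p <= i)%N ->
  ((polymx_apply p A v)^T <= krylov_mx A v i)%MS.
Proof.
move=> hp; apply/submxP; exists (\row_(s < i) p`_s).
rewrite krylov_mul; congr (_ ^T); congr polymx_apply.
apply/polyP => j; rewrite coef_poly; case: ifP => [hj|/negbT]; first by rewrite /rv2f insubT /= mxE.
rewrite -leqNgt => hj.
by rewrite nth_default // (leq_trans hp).
Qed.

Lemma krylov_row A v i (s : 'I_i) : row s (krylov_mx A v i) = (polymx_apply 'X^s A v)^T.
Proof. by apply/matrixP => x c; rewrite PAXn !mxE (ord1 x). Qed.

End Gen.



Section Block.
Variable C : numClosedFieldType.
Variables (n : nat) (p_ : 'I_n -> nat).

Lemma iter_block (B : forall i, 'M[C]_(p_ i)) (V : forall i, 'cV[C]_(p_ i)) s :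
  iter s (mulmx (mxdiag B)) (mxcol V) = mxcol (fun j => iter s (mulmx (B j)) (V j)).
Proof. by elim: s => //= s ->; rewrite mul_mxdiag_mxcol. Qed.

Lemma mxcolZ' (c : C) (V : forall i, 'cV[C]_(p_ i)) :
  c *: mxcol V = mxcol (fun j => c *: V j).
Proof. by apply/matrixP => i j; rewrite !mxE. Qed.

Lemma PA_block (B : forall i, 'M[C]_(p_ i)) (V : forall i, 'cV[C]_(p_ i)) p :
  polymx_apply p (mxdiag B) (mxcol V) = mxcol (fun j => polymx_apply p (B j) (V j)).
Proof.
rewrite /polymx_apply.
transitivity (\sum_(i < size p) mxcol (fun j => p`_i *: iter i (mulmx (B j)) (V j))).
  by apply: eq_bigr => i _; rewrite iter_block mxcolZ'.
by rewrite mxcol_sum.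
Qed.

Lemma adj_mxcol (V : forall i, 'cV[C]_(p_ i)) :
  adj (mxcol V) = mxrow (fun j => adj (V j)).
Proof. by apply/matrixP => i j; rewrite !mxE. Qed.

End Block.



Section Jordan.
Variable C : numClosedFieldType.
Variables (z : C) (kj : nat) (al : nat -> C).
Local Notation J := (jordan_block z kj al).
Local Notation e := (delta_mx ord_max 0 : 'cV[C]_(kj.+1)).

Lemma J_mul (u : 'cV[C]_(kj.+1)) (a : 'I_kj.+1) :
  (J *m u) a 0 = z * u a 0 + (if (a < kj)%N then al (kj - a) * u (inord a.+1) 0 else 0).
Proof.
rewrite mxE (bigD1 a) //= !mxE eqxx; congr (_ + _).
case: ifP => ha.
  have hne : (inord a.+1 : 'I_kj.+1) != a.
    by apply/eqP => /(congr1 (@nat_of_ord _)); rewrite inordK // => /esym/n_Sn.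
  rewrite (bigD1 (inord a.+1)) /=; last by rewrite hne.
  rewrite !mxE eq_sym (negbTE hne) inordK // eqxx big1 ?addr0 // => b /andP [hb1 hb2x].
  rewrite !mxE eq_sym (negbTE hb1); case: ifP; last by rewrite mul0r.
  move=> /eqP hb; case/negP: hb2x; apply/eqP/val_inj; rewrite /= inordK //.
rewrite big1 // => b hb; rewrite !mxE eq_sym (negbTE hb); case: ifP; last by rewrite mul0r.
move=> /eqP hbe; have := ltn_ord b; rewrite hbe ltnS leqNgt.
by have := ltn_ord a; rewrite ltnS leq_eqVlt ha orbF => /eqP ->; rewrite ltnSn.
Qed.

Definition Tay (p : {poly C}) (r : nat) := (p^`N(r)).[z] * \prod_(1 <= i < r.+1) al i.

Lemma PA_jordan (p : {poly C}) (a : 'I_kj.+1) :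
  (polymx_apply p J e) a 0 = Tay p (kj - a).
Proof.
elim/poly_ind: p a => [|p c IH] a.
  by rewrite PA0 mxE /Tay nderivn_poly0 ?size_poly0 // horner0 mul0r.
rewrite PAD PAC; have -> : polymx_apply (p * 'X) J e = J *m polymx_apply p J e by rewrite mulrC PAXM.
rewrite mxE [in X in _ + X]mxE J_mul !IH.
rewrite /Tay.
have ha := ltn_ord a.
case: ifP => hlt.
  have -> : (kj - a = (kj - a.+1).+1)%N by rewrite subnS prednK // subn_gt0.
  rewrite inordK //; set r := (kj - a.+1)%N.
  rewrite nderivnMXaddC hornerD hornerMX big_nat_recr //=.
  rewrite mxE.
  have -> : (a == ord_max) = false.
    by apply/negP => /eqP /(congr1 (@nat_of_ord _)) /= ha'; rewrite ha' ltnn in hlt.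
  rewrite /= mulr0 addr0; ring.
have hak : (a : nat) = kj by apply/eqP; rewrite eqn_leq -ltnS ha leqNgt hlt.
have -> : (kj - a = 0)%N by rewrite hak subnn.
have -> : a = ord_max by apply/val_inj.
rewrite !nderivn0 hornerMXaddC big_geq // mxE !eqxx /= !mulr1 addr0; ring.
Qed.

End Jordan.



Section IP.
Variable C : numClosedFieldType.

Lemma adjZ m k (c : C) (A : 'M[C]_(m, k)) : adj (c *: A) = c^* *: adj A.
Proof. by apply/matrixP => i j; rewrite !mxE rmorphM. Qed.

Lemma adj_mulE m (u v : 'cV[C]_m) : (adj u *m v) 0 0 = \sum_a (u a 0)^* * v a 0.
Proof. by rewrite mxE; apply: eq_bigr => a _; rewrite !mxE. Qed.

Lemma ip_vec n (z : 'I_n -> C) kj beta alpha p q :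
  sobolev_ip z kj beta alpha p q =
  (adj (polymx_apply q (Zmat z kj alpha) (wvec kj beta)) *m
       polymx_apply p (Zmat z kj alpha) (wvec kj beta)) 0 0.
Proof.
rewrite /Zmat /wvec !PA_block adj_mxcol mul_mxrow_mxcol summxE /sobolev_ip.
apply: eq_bigr => j _; rewrite !PAvZ adjZ -scalemxAl -scalemxAr !scalerA mxE.
rewrite normCKC; congr (_ * _); rewrite adj_mulE.
rewrite (reindex_inj rev_ord_inj) /=; apply: eq_bigr => r _.
rewrite !PA_jordan /= subSS; set s := (kj j - r)%N.
rewrite /Tay !nderivn_def !hornerMn rmorphMn normCKC !rmorphM fmorphV /= conjC_nat.
have hf : (s`!)%:R != 0 :> C by rewrite pnatr_eq0 -lt0n fact_gt0.
rewrite -(mulr_natr (q^`N(s).[z j]^* )) -(mulr_natr (p^`N(s).[z j])).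
move: hf; move: (s`!%:R : C) => f hf.
move: (\prod_(1 <= i < s.+1) alpha j i) => P.
move: (q^`N(s).[z j]^* ) (p^`N(s).[z j]) (P^* ) => a b Pc.
by field.
Qed.

End IP.



Section Main.
Variable C : numClosedFieldType.
Variables (m : nat) (A : 'M[C]_m) (v : 'cV[C]_m).
Local Notation PA p := (polymx_apply p A v).
Variable K : nat.

Lemma colq_lt (Q : 'M[C]_(m, K)) q (i : 'I_K) : colq Q q i = col i Q.
Proof. by rewrite /colq valK. Qed.

Lemma colq_K (Q : 'M[C]_(m, K)) q : colq Q q K = q.
Proof. by rewrite /colq insubF // ltnn. Qed.

Lemma adj_col (Q : 'M[C]_(m, K)) i : adj (col i Q) = row i (adj Q).
Proof. by apply/matrixP => a b; rewrite !mxE. Qed.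

Lemma mul_col_entry k (u : 'M[C]_(k, m)) (Q : 'M[C]_(m, K)) i a :
  (u *m col i Q) a 0 = (u *m Q) a i.
Proof. by rewrite !mxE; apply: eq_bigr => b _; rewrite !mxE. Qed.

Lemma orthoO (Q : 'M[C]_(m, K)) q :
  adj Q *m Q = 1%:M -> adj q *m Q = 0 -> adj q *m q = 1%:M ->
  forall a b, (a <= K)%N -> (b <= K)%N ->
  (adj (colq Q q a) *m colq Q q b) 0 0 = (a == b)%:R.
Proof.
move=> hQ hqQ hq a b ha hb.
case: (ltnP a K) => ha'; case: (ltnP b K) => hb'.
- have -> : a = Ordinal ha' by []. have -> : b = Ordinal hb' by [].
  rewrite !colq_lt adj_col mul_col_entry -row_mul mxE hQ mxE //.
- have hbK : b = K by apply/eqP; rewrite eqn_leq hb hb'.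
  have -> : a = Ordinal ha' by []. rewrite hbK colq_K colq_lt.
  rewrite adj_mulE /=.
  have := hqQ; move/matrixP/(_ 0 (Ordinal ha')); rewrite !mxE => H0.
  rewrite (_ : (a == K) = false); last by apply/negbTE; rewrite neq_ltn ha'.
  transitivity (\sum_c (adj q 0 c * Q c (Ordinal ha'))^* ).
    by apply: eq_bigr => c _; rewrite !mxE rmorphM /= conjCK mulrC.
  by rewrite -rmorph_sum H0 rmorph0.
- have haK : a = K by apply/eqP; rewrite eqn_leq ha ha'.
  have -> : b = Ordinal hb' by []. rewrite haK colq_K colq_lt mul_col_entry hqQ mxE.
  by rewrite (_ : (K == b) = false) //; apply/negbTE; rewrite neq_ltn hb' orbT.
have haK : a = K by apply/eqP; rewrite eqn_leq ha ha'.
have hbK : b = K by apply/eqP; rewrite eqn_leq hb hb'.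
by rewrite haK hbK colq_K hq !mxE !eqxx.
Qed.

Definition rhs (p : nat -> {poly C}) (H : 'M[C]_K) (h : C) (j : 'I_K) : {poly C} :=
  \sum_(i < K) H i j *: p i + (h * ek K 0 j) *: p K.

Lemma entryL (Q : 'M[C]_(m, K)) q (p : nat -> {poly C}) :
  (forall l, (l <= K)%N -> PA (p l) = colq Q q l) ->
  forall c j, (A *m Q) c j = PA ('X * p j) c 0.
Proof.
by move=> hp c j; rewrite PAXM hp ?(ltnW (ltn_ord j)) // colq_lt mul_col_entry.
Qed.

Lemma entryR (Q : 'M[C]_(m, K)) q (p : nat -> {poly C}) H h :
  (forall l, (l <= K)%N -> PA (p l) = colq Q q l) ->
  forall c j, (Q *m H + h *: (q *m ek K)) c j = PA (rhs p H h j) c 0.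
Proof.
move=> hp c j; rewrite /rhs PAD PAsum PAZ !mxE summxE big_ord1 !mxE hp // colq_K.
congr (_ + _); last by ring.
apply: eq_bigr => i _; rewrite PAZ hp ?(ltnW (ltn_ord i)) // colq_lt !mxE mulrC //.
Qed.

Lemma poly_eval_eq (p q : {poly C}) : (forall x, p.[x] = q.[x]) -> p = q.
Proof.
move=> he; apply/eqP; rewrite -subr_eq0; apply/negPn/negP => hne.
have := max_poly_roots hne (rs := [seq i%:R | i <- iota 0 (size (p - q))]).
rewrite size_map size_iota ltnn => H; apply: notF; apply: H.
  by apply/allP => x /mapP [i _ ->]; rewrite /root hornerD hornerN he subrr.
by rewrite map_inj_uniq ?iota_uniq // => i j /eqP; rewrite eqr_nat => /eqP.
Qed.

Lemma rec_iff (p : nat -> {poly C}) H h :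
  recurrence p H h <-> forall j : 'I_K, 'X * p j = rhs p H h j.
Proof.
split.
  move=> hr j; apply: poly_eval_eq => x; have := hr x; move/matrixP/(_ 0 j).
  rewrite !mxE /rhs hornerD horner_sum hornerZ => E.
  rewrite (mulrC 'X) hornerMX (mulrC _ x) E !mxE; congr (_ + _); last by ring.
  by apply: eq_bigr => i _; rewrite hornerZ !mxE mulrC.
move=> hr x; apply/matrixP => i0 j; rewrite (ord1 i0) !mxE.
have := congr1 (fun P => P.[x]) (hr j); rewrite /= (mulrC 'X) hornerMX (mulrC _ x) => ->.
rewrite /rhs hornerD horner_sum hornerZ mxE; congr (_ + _); last by rewrite mulrAC.
by apply: eq_bigr => i _; rewrite hornerZ !mxE mulrC.
Qed.

Lemma eqn_col (Q : 'M[C]_(m, K)) q (p : nat -> {poly C}) H h :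
  (forall l, (l <= K)%N -> PA (p l) = colq Q q l) ->
  (A *m Q = Q *m H + h *: (q *m ek K)) <-> forall j : 'I_K, PA ('X * p j) = PA (rhs p H h j).
Proof.
move=> hp; split.
  move=> E j; apply/matrixP => c i0; rewrite (ord1 i0) -(entryL hp) -(entryR _ _ hp).
  by rewrite E.
by move=> E; apply/matrixP => c j; rewrite (entryL hp) (entryR _ _ hp) E.
Qed.

Lemma adjQQ k (Q : 'M[C]_(m, k)) a b : (adj Q *m Q) a b = (adj (col a Q) *m col b Q) 0 0.
Proof.
rewrite !mxE; apply: eq_bigr => c _; rewrite !mxE //.
Qed.

Lemma trmx_entry k (u : 'cV[C]_k) x c : u^T x c = u c 0.
Proof. by rewrite mxE (ord1 x). Qed.

Lemma part2 (ip : {poly C} -> {poly C} -> C)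
  (hip : forall p q, ip p q = (adj (PA q) *m PA p) 0 0)
  (p : nat -> {poly C}) H h :
  sobolev_onseq ip p K -> recurrence p H h ->
  let Q : 'M[C]_(m, K) := \matrix_(c < m, l < K) (PA (p l)) c 0 in
  let q : 'cV[C]_m := PA (p K) in
  nested_onb A v Q /\ A *m Q = Q *m H + h *: (q *m ek K).
Proof.
move=> [hs ho] hr Q q.
have hcol : forall l : 'I_K, col l Q = PA (p l).
  by move=> l; apply/matrixP => c i0; rewrite (ord1 i0) !mxE.
have hp : forall l, (l <= K)%N -> PA (p l) = colq Q q l.
  move=> l hl; case: (ltnP l K) => hl'.
    by have -> : l = Ordinal hl' by []; rewrite colq_lt hcol.
  have -> : l = K by apply/eqP; rewrite eqn_leq hl hl'.
  by rewrite colq_K.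
split; last by apply/(eqn_col H h hp) => j; rewrite (proj1 (rec_iff _ _ _) hr j).
split.
  apply/matrixP => a b; rewrite adjQQ !hcol -hip ho ?(ltnW (ltn_ord _)) // mxE eq_sym.
  done.
move=> i /andP [hi1 hi2]; apply/andP; split.
  apply/row_subP => r; case: (ltnP r i) => hri.
    have -> : row r (firstcols Q i) = (PA (p r))^T.
      by apply/matrixP => x c; rewrite trmx_entry !mxE hri.
    by apply: krylov_sub; rewrite hs ?(ltnW (ltn_ord r)).
  have -> : row r (firstcols Q i) = 0.
    by apply/matrixP => x c; rewrite !mxE ltnNge hri.
  by rewrite sub0mx.
have span : forall t, (t <= i)%N -> forall r : {poly C}, (size r <= t)%N -> ((PA r)^T <= firstcols Q i)%MS.
  elim => [|t IH] ht r hsz.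
    by move: hsz; rewrite size_poly_leq0 => /eqP ->; rewrite PA0 trmx0 sub0mx.
  have htK : (t < K)%N by apply: leq_trans hi2.
  have hpt : size (p t) = t.+1 by rewrite hs // ltnW.
  have hl : lead_coef (p t) != 0.
    by rewrite lead_coef_eq0 -size_poly_gt0 hpt.
  set c := r`_t / lead_coef (p t).
  have hsz2 : (size (r - c *: p t)%R <= t)%N.
    apply/leq_sizeP => j hj; rewrite coefB coefZ.
    move: hj; rewrite leq_eqVlt => /orP [/eqP <-|hj].
      have -> : (p t)`_t = lead_coef (p t) by rewrite lead_coefE hpt.
      by rewrite /c divfK // subrr.
    by rewrite !nth_default ?mulr0 ?subr0 // ?hpt // (leq_trans hsz).
  have -> : PA r = PA (r - c *: p t) + c *: PA (p t) by rewrite -PAZ -PAD subrK.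
  have -> : forall (x y : 'cV[C]_m), (x + c *: y)^T = x^T + c *: y^T.
    by move=> x y; apply/matrixP => a b; rewrite !mxE.
  apply: addmx_sub; first by apply: IH => //; apply: ltnW.
  apply: scalemx_sub.
  have -> : (PA (p t))^T = row (Ordinal htK) (firstcols Q i).
    by apply/matrixP => x c'; rewrite trmx_entry !mxE ht.
  exact: row_sub.
apply/row_subP => s; rewrite krylov_row; apply: (span i) => //.
by rewrite size_polyXn.
Qed.

Lemma krylov_mul_row i (p : {poly C}) : (size p <= i)%N ->
  (\row_(s < i) p`_s) *m krylov_mx A v i = (PA p)^T.
Proof.
move=> hp; rewrite krylov_mul; congr (_ ^T); congr polymx_apply.
apply/polyP => j; rewrite coef_poly; case: ifP => [hj|/negbT]; first by rewrite /rv2f insubT /= mxE.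
rewrite -leqNgt => hj.
by rewrite nth_default // (leq_trans hp).
Qed.

Lemma PA_inj N (r : {poly C}) : row_free (krylov_mx A v N) -> (size r <= N)%N ->
  PA r = 0 -> r = 0.
Proof.
move=> hf hr h0.
have : (\row_(s < N) r`_s) *m krylov_mx A v N = 0 *m krylov_mx A v N.
  by rewrite krylov_mul_row // h0 trmx0 mul0mx.
move/(row_free_inj hf) => hrow.
apply/polyP => j; rewrite coef0; case: (ltnP j N) => hj.
  by move/matrixP/(_ 0 (Ordinal hj)): hrow; rewrite !mxE.
by rewrite nth_default // (leq_trans hr).
Qed.

Lemma krylov_first (Q : 'M[C]_(m, K)) : nested_onb A v Q ->
  forall l, (l <= K)%N -> (krylov_mx A v l <= firstcols Q l)%MS.
Proof.
move=> [_ hn] [|l] hl; first by rewrite flatmx0 sub0mx.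
by have /andP [] := hn l.+1 hl.
Qed.

Lemma colq_sub (Q : 'M[C]_(m, K)) q : nested_onb A v Q ->
  forall l, (l < K)%N -> ((colq Q q l)^T <= krylov_mx A v l.+1)%MS.
Proof.
move=> [hQ hn] l hl; have /andP [h1 _] := hn l.+1 hl.
apply: submx_trans h1.
have -> : (colq Q q l)^T = row (Ordinal hl) (firstcols Q l.+1).
  by apply/matrixP => x c; rewrite trmx_entry -[l]/(val (Ordinal hl)) colq_lt !mxE ltnSn.
exact: row_sub.
Qed.

Lemma not_in_span (Q : 'M[C]_(m, K)) q :
  (forall a b, (a <= K)%N -> (b <= K)%N ->
     (adj (colq Q q a) *m colq Q q b) 0 0 = (a == b)%:R) ->
  forall l, (l <= K)%N -> ~ ((colq Q q l)^T <= firstcols Q l)%MS.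
Proof.
move=> hO l hl /submxP [D hD].
have hO' := hO l l hl hl; rewrite eqxx adj_mulE in hO'.
set u := colq Q q l.
suff : \sum_c (u c 0)^* * u c 0 = 0 by rewrite hO' => /eqP; rewrite oner_eq0.
have hu : forall c, u c 0 = \sum_r D 0 r * firstcols Q l r c.
  by move=> c; rewrite -(trmx_entry _ 0) hD mxE.
transitivity (\sum_r (D 0 r)^* * \sum_c ((firstcols Q l r c)^* * u c 0)).
  rewrite (eq_bigr (fun c => \sum_r (D 0 r)^* * (firstcols Q l r c)^* * u c 0)); last first.
    by move=> c _; rewrite {1}hu rmorph_sum mulr_suml; apply: eq_bigr => r _; rewrite rmorphM.
  rewrite exchange_big; apply: eq_bigr => r _; rewrite mulr_sumr.
  by apply: eq_bigr => c _; rewrite mulrA.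
rewrite big1 // => r _.
case: (ltnP r l) => hrl.
  rewrite (eq_bigr (fun c => (colq Q q r c 0)^* * u c 0)); last first.
    by move=> c _; rewrite !mxE hrl colq_lt mxE.
  rewrite -adj_mulE hO ?(ltnW (ltn_ord r)) //.
  by rewrite (_ : (r == l :> nat) = false) ?mulr0 //; apply/negbTE; rewrite neq_ltn hrl.
by rewrite big1 ?mulr0 // => c _; rewrite !mxE ltnNge hrl /= rmorph0 mul0r.
Qed.

Lemma rowfree_kry (Q : 'M[C]_(m, K)) q (p : nat -> {poly C}) :
  (forall a b, (a <= K)%N -> (b <= K)%N ->
     (adj (colq Q q a) *m colq Q q b) 0 0 = (a == b)%:R) ->
  (forall l, (l <= K)%N -> (size (p l) <= l.+1)%N /\ PA (p l) = colq Q q l) ->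
  row_free (krylov_mx A v K.+1).
Proof.
move=> hO hp.
pose G : 'M[C]_(K.+1, m) := \matrix_(l < K.+1, c < m) colq Q q l c 0.
have hG : G *m adj G = 1%:M.
  apply/matrixP => a b; rewrite !mxE.
  have hb := ltn_ord b; have ha := ltn_ord a.
  rewrite eq_sym -(hO b a) ?adj_mulE //.
  by apply: eq_bigr => c _; rewrite !mxE mulrC.
have hsub : (G <= krylov_mx A v K.+1)%MS.
  apply/row_subP => l; have hl := ltn_ord l.
  have -> : row l G = (PA (p l))^T.
    by apply/matrixP => x c; rewrite trmx_entry (proj2 (hp l hl)) !mxE.
  by apply: krylov_sub; apply: leq_trans (proj1 (hp l hl)) _.
rewrite /row_free eqn_leq rank_leq_row /=.
have := mxrankM_maxl G (adj G); rewrite hG mxrank1 => h1.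
by apply: leq_trans h1 (mxrankS hsub).
Qed.

Lemma size_rhs (p : nat -> {poly C}) H h (j : 'I_K) :
  (forall l, (l <= K)%N -> (size (p l) <= l.+1)%N) ->
  (size ('X * p j - rhs p H h j)%R <= K.+1)%N.
Proof.
move=> hs; apply/leq_sizeP => t ht.
have hj := ltn_ord j.
rewrite coefB coefXM /rhs coefD coef_sum coefZ.
rewrite (nth_default _ (leq_trans (hs K (leqnn _)) ht)) mulr0 addr0.
rewrite big1 ?subr0 => [|i _].
  case: t ht => // t ht /=; apply: nth_default; apply: leq_trans (hs j (ltnW hj)) _.
  by apply: leq_trans hj _; rewrite -ltnS.
rewrite coefZ nth_default ?mulr0 //; apply: leq_trans (hs i (ltnW (ltn_ord i))) _.
by apply: leq_trans ht; rewrite ltnS ltnW.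
Qed.

Lemma part1 (ip : {poly C} -> {poly C} -> C)
  (hip : forall p q, ip p q = (adj (PA q) *m PA p) 0 0)
  (Q : 'M[C]_(m, K)) H h q : (0 < K)%N ->
  nested_onb A v Q -> h != 0 -> adj q *m Q = 0 -> adj q *m q = 1%:M ->
  A *m Q = Q *m H + h *: (q *m ek K) ->
  (exists p : nat -> {poly C}, forall l, (l <= K)%N ->
        (size (p l) <= l.+1)%N /\ PA (p l) = colq Q q l) /\
  (forall p : nat -> {poly C},
     (forall l, (l <= K)%N -> (size (p l) <= l.+1)%N /\ PA (p l) = colq Q q l) ->
     sobolev_onseq ip p K /\ recurrence p H h).
Proof.
move=> hK hnest hh hqQ hq E.
have hO := orthoO (proj1 hnest) hqQ hq.
split.
  have jlt : (K.-1 < K)%N by rewrite ltn_predL.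
  pose jK := Ordinal jlt.
  pose pl l := \poly_(s < l.+1) rv2f ((colq Q q l)^T *m pinvmx (krylov_mx A v l.+1)) s.
  have hpl : forall l, (l < K)%N -> PA (pl l) = colq Q q l.
    move=> l hl; apply: trmx_inj; rewrite -krylov_mul mulmxKpV //; exact: colq_sub.
  have hszpl : forall l, (size (pl l) <= l.+1)%N by move=> l; apply: size_poly.
  pose pK := h^-1 *: ('X * pl K.-1 - \sum_(i < K) H i jK *: pl i).
  exists (fun l => if (l < K)%N then pl l else pK).
  move=> l hl; case: ifP => hlK; first by split; [apply: hszpl | apply: hpl].
  have -> : l = K by apply/eqP; rewrite eqn_leq hl leqNgt hlK.
  rewrite colq_K; split.
    apply/leq_sizeP => t ht; rewrite coefZ coefB coefXM coef_sum.
    rewrite big1 => [|i _]; last first.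
      rewrite coefZ nth_default ?mulr0 //; apply: leq_trans (hszpl i) _.
      by apply: leq_trans ht; rewrite ltnS ltnW.
    case: t ht => // t ht /=; rewrite nth_default ?subr0 ?mulr0 //.
    by apply: leq_trans (hszpl _) _; rewrite prednK.
  rewrite PAZ PAB PAXM PAsum hpl // (colq_lt Q q jK).
  apply/matrixP => c i0; rewrite (ord1 i0).
  have := E; move/matrixP/(_ c jK) => Ec.
  rewrite !mxE summxE.
  have -> : \sum_j A c j * col jK Q j 0 = (A *m Q) c jK.
    by rewrite mxE; apply: eq_bigr => j _; rewrite mxE.
  rewrite Ec !mxE big_ord1 !mxE eqxx mulr1.
  have -> : \sum_k PA (H k jK *: pl k) c 0 = \sum_i Q c i * H i jK.
    by apply: eq_bigr => i _; rewrite PAZ hpl // (colq_lt Q q i) !mxE mulrC.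
  rewrite (_ : ord0 = 0) //.
  by field.
move=> p hp.
have hs : forall l, (l <= K)%N -> size (p l) = l.+1.
  move=> l hl; apply/eqP; rewrite eqn_leq (proj1 (hp l hl)) /= ltnNge; apply/negP => hle.
  apply: (not_in_span hO hl); rewrite -(proj2 (hp l hl)).
  exact: submx_trans (krylov_sub _ _ hle) (krylov_first hnest hl).
split.
  split => // a b ha hb; rewrite hip !(proj2 (hp _ _)) // hO // eq_sym //.
apply/rec_iff => j; apply/eqP; rewrite -subr_eq0; apply/eqP.
apply: (PA_inj (rowfree_kry hO hp)); first by apply: size_rhs => l hl; exact: (proj1 (hp l hl)).
apply/eqP; rewrite PAB subr_eq0; apply/eqP.
have hp' : forall l, (l <= K)%N -> PA (p l) = colq Q q l by move=> l hl; exact: (proj2 (hp l hl)).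
by apply: (proj1 (eqn_col H h hp') E).
Qed.

End Main.



Theorem corollary1 (C : numClosedFieldType) (n : nat) (z : 'I_n -> C)
  (kj : 'I_n -> nat) (beta : 'I_n -> C) (alpha : 'I_n -> nat -> C) :
  (1 <= n)%N -> injective z -> (forall j, beta j != 0) ->
  (forall j i, (1 <= i <= kj j)%N -> alpha j i != 0) ->
  let m := (\sum_(j < n) (kj j).+1)%N in
  let Z : 'M[C]_m := Zmat z kj alpha in
  let w : 'cV[C]_m := wvec kj beta in
  let ip := sobolev_ip z kj beta alpha in
  forall k : nat, (0 < k)%N -> (k < m)%N ->
  (forall (Q : 'M[C]_(m, k)) (H : 'M[C]_k) (h : C) (q : 'cV[C]_m),
     nested_onb Z w Q -> is_hessenberg H -> 0 < h ->
     adj q *m Q = 0 -> adj q *m q = 1%:M ->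
     Z *m Q = Q *m H + h *: (q *m ek k) ->
     (exists p : nat -> {poly C}, forall l, (l <= k)%N ->
        (size (p l) <= l.+1)%N /\ polymx_apply (p l) Z w = colq Q q l) /\
     (forall p : nat -> {poly C},
        (forall l, (l <= k)%N ->
           (size (p l) <= l.+1)%N /\ polymx_apply (p l) Z w = colq Q q l) ->
        sobolev_onseq ip p k /\ recurrence p H h))
  /\
  (forall (p : nat -> {poly C}) (H : 'M[C]_k) (h : C),
     sobolev_onseq ip p k -> is_hessenberg H -> 0 < h -> recurrence p H h ->
     let Q : 'M[C]_(m, k) := \matrix_(c < m, l < k) (polymx_apply (p l) Z w) c 0 in
     let q : 'cV[C]_m := polymx_apply (p k) Z w in
     nested_onb Z w Q /\ Z *m Q = Q *m H + h *: (q *m ek k)).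
Proof.
move=> hn zinj hb ha m Z w ip k hk hkm.
have hip : forall p q, ip p q = (adj (polymx_apply q Z w) *m polymx_apply p Z w) 0 0.
  by move=> p q; exact: ip_vec.
split.
  move=> Q H h q hnest hH hh hqQ hq E.
  by apply: (part1 hip) => //; rewrite gt_eqF.
move=> p H h hs hH hh hr.
have X := part2 hip hs hr; exact: X.
Qed.
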